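(* Let $\pi(m)=(1/2)^m$ for $m\in\mathbb{N}^+$ (and $\pi(m)=0$ otherwise), and let the proposal be $q(m,\{m+1\})=\theta=1-q(m,\{m-1\})$ for $m\in\mathbb{Z}$, with $\theta\in(0,1)$. Take $N=1$ and weights $W_{m,1}=(b-\varepsilon_m)\,\mathrm{Ber}(s_m)+\varepsilon_m$, where $b>1$, $\varepsilon_m=m^{-(3-(m \bmod 3))}$, $\mathrm{Ber}(s_m)$ is a Bernoulli random variable with parameter $s_m$, and $s_m=\frac{1-\varepsilon_m}{b-\varepsilon_m}$ so that $\mathbb{E}[W_{m,1}]=1$. Then for any $\theta\in(0,1)$ there exists $b>1$ such that the Markov chain generated by the noisy kernel $\tilde P_1$ is transient.
   Context: Noisy Metropolis–Hastings kernel $\tilde P_N$: from state $m$, propose $Y\sim q(m,\cdot)$, draw independent weights $W\sim Q_{m,N}$, $U\sim Q_{Y,N}$ (the laws of $W_{m,N}$, $W_{Y,N}$), and move to $Y$ with probability $\min\{1,\frac{\pi(Y)q(Y,m)}{\pi(m)q(m,Y)}\cdot\frac{U}{W}\}$, otherwise stay at $m$ (proposals outside $\mathbb{N}^+$ have $\pi(Y)=0$ and are rejected). *)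

(* Defs.v *)
From Stdlib Require Import Reals List Arith.
From Coquelicot Require Import Coquelicot.
Import ListNotations.
Open Scope R_scope.

(* States of the chain are natural numbers; the state space is N^+ = {m >= 1}.
   The value 0 stands for the (only reachable) proposal outside N^+. *)

Definition pi_t (m : nat) : R := if (1 <=? m)%nat then (1/2) ^ m else 0.

Definition q_prop (theta : R) (m y : nat) : R :=
  if Nat.eqb y (S m) then theta
  else if Nat.eqb (S y) m then 1 - theta
  else 0.

Definition eps (m : nat) : R := / (INR m ^ (3 - m mod 3)).

Definition s_par (b : R) (m : nat) : R := (1 - eps m) / (b - eps m).

(* Law Q_{m,1} of W_{m,1} = (b - eps_m) Ber(s_m) + eps_m, as a finite list of
   (probability, value) pairs: value b with prob. s_m, value eps_m with
   prob. 1 - s_m. *)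
Definition W_law (b : R) (m : nat) : list (R * R) :=
  [(s_par b m, b); (1 - s_par b m, eps m)].

(* Noisy acceptance probability for the move x -> y:
   E[ min{1, pi(y)q(y,x)/(pi(x)q(x,y)) * U/W} ],  W ~ Q_x, U ~ Q_y independent. *)
Definition noisy_acc (theta b : R) (x y : nat) : R :=
  fold_right Rplus 0
    (map (fun pw : R * R =>
       fold_right Rplus 0
         (map (fun pu : R * R =>
            fst pw * fst pu *
            Rmin 1 ((pi_t y * q_prop theta y x) / (pi_t x * q_prop theta x y)
                    * (snd pu / snd pw)))
          (W_law b y)))
     (W_law b x)).

(* Proposals to 0 have pi = 0 and hence acceptance probability 0.
   State 0 (never visited from N^+) is made absorbing for totality. *)
Definition Pnoisy (theta b : R) (x y : nat) : R :=
  if Nat.eqb x 0 then (if Nat.eqb y 0 then 1 else 0)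
  else if Nat.eqb y (S x) then theta * noisy_acc theta b x (S x)
  else if Nat.eqb (S y) x then (1 - theta) * noisy_acc theta b x y
  else if Nat.eqb y x then
    1 - theta * noisy_acc theta b x (S x)
      - (1 - theta) * noisy_acc theta b x (pred x)
  else 0.

(* hit P m n x = P_x(the chain visits m at some time t with 1 <= t <= n). *)
Fixpoint hit (P : nat -> nat -> R) (m : nat) (n : nat) (x : nat) : R :=
  match n with
  | O => 0
  | S n' => Series (fun z => P x z * (if Nat.eqb z m then 1 else hit P m n' z))
  end.

Definition return_prob (P : nat -> nat -> R) (m : nat) : Rbar :=
  Lim_seq (fun n => hit P m n m).

Definition transient_state (P : nat -> nat -> R) (m : nat) : Prop :=
  Rbar_lt (return_prob P m) (Finite 1).

Definition transient_chain (P : nat -> nat -> R) : Prop :=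
  forall m : nat, (1 <= m)%nat -> transient_state P m.

(* Main.v *)
Require Import Defs.
From Stdlib Require Import Reals Lia Lra.
From Coquelicot Require Import Coquelicot.
Open Scope R_scope.

Definition pt (y : nat) (c : R) (z : nat) : R := if Nat.eqb z y then c else 0.

Lemma sum_pt : forall y c n, sum_n (pt y c) n = if (n <? y)%nat then 0 else c.
Proof.
  intros y c n; induction n.
  - rewrite sum_O; unfold pt. destruct (Nat.eqb_spec 0 y); destruct (Nat.ltb_spec 0 y); try lia; auto.
  - rewrite sum_Sn, IHn; unfold pt.
    destruct (Nat.eqb_spec (S n) y); destruct (Nat.ltb_spec n y); destruct (Nat.ltb_spec (S n) y);
      try lia; first [exact (Rplus_0_l _) | exact (Rplus_0_r _)].
Qed.

Lemma is_series_pt : forall y c, is_series (pt y c) c.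
Proof.
  intros y c.
  change (is_lim_seq (sum_n (pt y c)) c).
  apply is_lim_seq_ext_loc with (u := fun _ => c); [|apply is_lim_seq_const].
  exists y; intros n Hn. rewrite sum_pt. destruct (Nat.ltb_spec n y); try lia; auto.
Qed.

Lemma Series_3pt : forall (P : nat -> R) (h : nat -> R) y1 y2 y3 c1 c2 c3,
  (forall z, P z = pt y1 c1 z + pt y2 c2 z + pt y3 c3 z) ->
  Series (fun z => P z * h z) = c1 * h y1 + c2 * h y2 + c3 * h y3.
Proof.
  intros P h y1 y2 y3 c1 c2 c3 HP.
  apply is_series_unique.
  assert (E : forall z, pt y1 (c1 * h y1) z + pt y2 (c2 * h y2) z + pt y3 (c3 * h y3) z
                        = P z * h z).
  { intro z. rewrite HP. unfold pt.
    destruct (Nat.eqb_spec z y1); destruct (Nat.eqb_spec z y2); destruct (Nat.eqb_spec z y3);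
      subst; ring. }
  apply (is_series_ext _ _ _ E).
  exact (is_series_plus _ _ _ _ (is_series_plus _ _ _ _ (is_series_pt y1 (c1*h y1))
     (is_series_pt y2 (c2 * h y2))) (is_series_pt y3 (c3 * h y3))).
Qed.

Section Markov.
Variable P : nat -> nat -> R.
Hypothesis Hrow : forall x, exists y1 y2 y3 c1 c2 c3,
  (forall z, P x z = pt y1 c1 z + pt y2 c2 z + pt y3 c3 z) /\
  0 <= c1 /\ 0 <= c2 /\ 0 <= c3 /\ c1 + c2 + c3 = 1.

Lemma hit_bounds : forall m n x, 0 <= hit P m n x <= 1.
Proof.
  intros m n; induction n; intro x; simpl. lra.
  destruct (Hrow x) as (y1 & y2 & y3 & c1 & c2 & c3 & HP & H1 & H2 & H3 & Hs).
  rewrite (Series_3pt (P x) (fun z => if Nat.eqb z m then 1 else hit P m n z)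
              y1 y2 y3 c1 c2 c3 HP).
  assert (Hh : forall z, 0 <= (if Nat.eqb z m then 1 else hit P m n z) <= 1).
  { intro z; destruct (Nat.eqb z m); [lra | apply IHn]. }
  destruct (Hh y1), (Hh y2), (Hh y3). nra.
Qed.

Variables (A D : nat -> R) (m : nat) (f : nat -> R).
Hypothesis Hm : (1 <= m)%nat.
Hypothesis Hrow3 : forall x, (1 <= x)%nat -> forall z,
  P x z = pt (pred x) (D x) z + pt x (1 - A x - D x) z + pt (S x) (A x) z.
Hypothesis HA : forall x, (m <= x)%nat -> 0 <= A x.
Hypothesis HD : forall x, (m <= x)%nat -> 0 <= D x.
Hypothesis HAD : forall x, (m <= x)%nat -> A x + D x <= 1.
Hypothesis Hf0 : forall x, 0 <= f x.
Hypothesis Hfm : 0 < f m.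
Hypothesis Hsup : forall x, (m < x)%nat ->
  D x * f (pred x) + (1 - A x - D x) * f x + A x * f (S x) <= f x.

Lemma hit_lyap : forall n x, (m < x)%nat -> hit P m n x <= f x / f m.
Proof.
  induction n; intros x Hx; simpl.
  - apply Rmult_le_pos; [auto | left; apply Rinv_0_lt_compat; auto].
  - rewrite (Series_3pt (P x) (fun z => if Nat.eqb z m then 1 else hit P m n z)
              (pred x) x (S x) _ _ _ (Hrow3 x ltac:(lia))).
    assert (Hh : forall z, (m <= z)%nat ->
               (if Nat.eqb z m then 1 else hit P m n z) <= f z / f m).
    { intros z Hz. destruct (Nat.eqb_spec z m).
      - subst. unfold Rdiv; rewrite Rinv_r; lra.
      - apply IHn; lia. }
    pose proof (Hh (pred x) ltac:(lia)). pose proof (Hh x ltac:(lia)).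
    pose proof (Hh (S x) ltac:(lia)).
    pose proof (HA x ltac:(lia)). pose proof (HD x ltac:(lia)). pose proof (HAD x ltac:(lia)).
    pose proof (Hsup x Hx).
    apply Rle_trans with ((D x * f (pred x) + (1 - A x - D x) * f x + A x * f (S x)) / f m).
    + unfold Rdiv in *. rewrite !Rmult_plus_distr_r, !Rmult_assoc.
      assert (1 - A x - D x >= 0) by lra.
      repeat apply Rplus_le_compat; apply Rmult_le_compat_l; lra.
    + unfold Rdiv. apply Rmult_le_compat_r; [left; apply Rinv_0_lt_compat; auto | auto].
Qed.

Hypothesis HAm : 0 < A m.
Hypothesis Hfdec : f (S m) < f m.

Lemma transient_m : transient_state P m.
Proof.
  unfold transient_state, return_prob.
  set (c := 1 - A m * (1 - f (S m) / f m)).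
  assert (Hc : c < 1).
  { unfold c. assert (f (S m) / f m < 1).
    { apply (Rmult_lt_reg_r (f m)); auto. unfold Rdiv; rewrite Rmult_assoc, Rinv_l; lra. }
    nra. }
  apply Rbar_le_lt_trans with (Finite c); [| simpl; auto].
  rewrite <- (Lim_seq_const c).
  apply Lim_seq_le_loc. exists 0%nat. intros n _.
  destruct n; simpl.
  - unfold c. pose proof (HAD m (le_n _)). pose proof (HA m (le_n _)).
    assert (f (S m) / f m >= 0).
    { unfold Rdiv. apply Rle_ge, Rmult_le_pos; [auto | left; apply Rinv_0_lt_compat; auto]. }
    pose proof (HD m (le_n _)). set (t := f (S m) / f m) in *.
    assert (A m * t >= 0) by (apply Rle_ge, Rmult_le_pos; lra). lra.
  - rewrite (Series_3pt (P m) (fun z => if Nat.eqb z m then 1 else hit P m n z)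
              (pred m) m (S m) _ _ _ (Hrow3 m Hm)).
    rewrite Nat.eqb_refl.
    destruct (Nat.eqb_spec (pred m) m); [lia|].
    destruct (Nat.eqb_spec (S m) m); [lia|].
    pose proof (hit_bounds m n (pred m)).
    pose proof (hit_lyap n (S m) ltac:(lia)).
    pose proof (HAD m (le_n _)). pose proof (HA m (le_n _)). pose proof (HD m (le_n _)).
    unfold c. set (t := f (S m) / f m) in *.
    assert (D m * hit P m n (pred m) <= D m * 1) by (apply Rmult_le_compat_l; lra).
    assert (A m * hit P m n (S m) <= A m * t) by (apply Rmult_le_compat_l; lra).
    lra.
Qed.
End Markov.

Ltac m3 x := pose proof (Nat.div_mod_eq x 3); pose proof (Nat.mod_upper_bound x 3 ltac:(lia)).

Definition NA4 (sx sy m1 m2 m3 m4 : R) :=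
  sx * sy * m1 + (sx * (1 - sy) * m2 + 0) + ((1 - sx) * sy * m3 + ((1 - sx) * (1 - sy) * m4 + 0) + 0).

Definition Rt theta x y := pi_t y * q_prop theta y x / (pi_t x * q_prop theta x y).

Lemma NA_eq : forall theta b x y, noisy_acc theta b x y =
  NA4 (s_par b x) (s_par b y) (Rmin 1 (Rt theta x y * (b / b))) (Rmin 1 (Rt theta x y * (eps y / b)))
      (Rmin 1 (Rt theta x y * (b / eps x))) (Rmin 1 (Rt theta x y * (eps y / eps x))).
Proof. intros. reflexivity. Qed.

Lemma NA4_bounds : forall sx sy m1 m2 m3 m4,
  0 <= sx <= 1 -> 0 <= sy <= 1 -> 0 <= m1 <= 1 -> 0 <= m2 <= 1 -> 0 <= m3 <= 1 -> 0 <= m4 <= 1 ->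
  0 <= NA4 sx sy m1 m2 m3 m4 <= 1.
Proof.
  intros. unfold NA4.
  assert (0 <= sy * m1 + (1 - sy) * m2 <= 1) by nra.
  assert (0 <= sy * m3 + (1 - sy) * m4 <= 1) by nra.
  nra.
Qed.

Lemma NA4_lower : forall sx sy m1 m2 m3 m4,
  0 <= sx <= 1 -> 0 <= sy <= 1 -> 0 <= m1 -> 0 <= m2 ->
  (1 - sx) * (sy * m3 + (1 - sy) * m4) <= NA4 sx sy m1 m2 m3 m4.
Proof. intros. unfold NA4. assert (0 <= sx * sy * m1) by (repeat apply Rmult_le_pos; lra).
  assert (0 <= sx * (1 - sy) * m2) by (repeat apply Rmult_le_pos; lra). nra. Qed.

Lemma mul_le1 : forall a m, 0 <= a -> m <= 1 -> a * m <= a.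
Proof. intros. rewrite <- (Rmult_1_r a) at 2. apply Rmult_le_compat_l; auto. Qed.

Lemma NA4_upper : forall sx sy m1 m2 m3 m4,
  0 <= sx <= 1 -> 0 <= sy <= 1 -> 0 <= m1 <= 1 -> 0 <= m2 <= 1 -> 0 <= m3 <= 1 -> 0 <= m4 ->
  NA4 sx sy m1 m2 m3 m4 <= sx + sy + m4.
Proof. intros. unfold NA4.
  assert (sx * sy * m1 <= sx * sy) by (apply mul_le1; nra).
  assert (sx * (1 - sy) * m2 <= sx * (1 - sy)) by (apply mul_le1; nra).
  assert ((1 - sx) * sy * m3 <= (1 - sx) * sy) by (apply mul_le1; nra).
  assert ((1 - sx) * (1 - sy) * m4 <= m4).
  { rewrite Rmult_comm. apply mul_le1; nra. }
  nra. Qed.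

Lemma NA4_lower2 : forall sx sy m1 m2 m3 m4,
  0 <= sx <= 1 -> 0 <= sy <= 1 -> 0 <= m1 -> 0 <= m2 -> 0 <= m3 -> 0 <= m4 ->
  sy * Rmin m1 m3 <= NA4 sx sy m1 m2 m3 m4.
Proof. intros. unfold NA4. pose proof (Rmin_l m1 m3). pose proof (Rmin_r m1 m3).
  assert (sx * sy * m1 >= sx * sy * Rmin m1 m3) by (apply Rle_ge, Rmult_le_compat_l; nra).
  assert ((1-sx) * sy * m3 >= (1-sx) * sy * Rmin m1 m3) by (apply Rle_ge, Rmult_le_compat_l; nra).
  assert (0 <= sx * (1 - sy) * m2) by (repeat apply Rmult_le_pos; lra).
  assert (0 <= (1 - sx) * (1 - sy) * m4) by (repeat apply Rmult_le_pos; lra).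
  nra. Qed.

Lemma Rmin1_bounds : forall t, 0 <= t -> 0 <= Rmin 1 t <= 1.
Proof. intros. split; [apply Rmin_glb; lra | apply Rmin_l]. Qed.

Lemma pow_ge_base : forall X k, 1 <= X -> (1 <= k)%nat -> X <= X ^ k.
Proof. intros. rewrite <- (pow_1 X) at 1. apply Rle_pow; auto. Qed.

Lemma eps_pos : forall x, (1 <= x)%nat -> 0 < eps x <= 1.
Proof.
  intros x Hx. unfold eps.
  assert (1 <= INR x) by (apply (le_INR 1); auto).
  assert (1 <= INR x ^ (3 - x mod 3)).
  { apply Rle_trans with (INR x); auto. m3 x. apply pow_ge_base; auto; lia. }
  split. apply Rinv_0_lt_compat; lra.
  rewrite <- Rinv_1. apply Rinv_le_contravar; lra.
Qed.

Lemma eps_half : forall x, (2 <= x)%nat -> eps x <= 1/2.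
Proof.
  intros x Hx. unfold eps.
  assert (2 <= INR x) by (apply (le_INR 2); auto).
  assert (2 <= INR x ^ (3 - x mod 3)).
  { apply Rle_trans with (INR x); auto. m3 x. apply pow_ge_base; try lra; lia. }
  unfold Rdiv; rewrite Rmult_1_l. apply Rinv_le_contravar; lra.
Qed.

Lemma eps_r : forall x r, (x mod 3 = r)%nat -> eps x = / INR x ^ (3 - r).
Proof. intros x r H. unfold eps. rewrite H. reflexivity. Qed.

Section S.
Variable b : R.
Hypothesis Hb : 2 <= b.

Lemma s_bounds : forall x, (1 <= x)%nat -> 0 <= s_par b x <= 1/b.
Proof.
  intros x Hx. destruct (eps_pos x Hx) as [H1 H2]. unfold s_par.
  split. apply Rmult_le_pos; [lra | left; apply Rinv_0_lt_compat; lra].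
  assert (E : 1/b - (1 - eps x) / (b - eps x) = eps x * (b - 1) * / (b * (b - eps x)))
    by (field; lra).
  assert (0 <= eps x * (b - 1) * / (b * (b - eps x))).
  { apply Rmult_le_pos. nra. left; apply Rinv_0_lt_compat; nra. }
  lra.
Qed.

Lemma s_lower : forall x, (2 <= x)%nat -> 1/(2*b) <= s_par b x.
Proof.
  intros x Hx. pose proof (eps_half x Hx). destruct (eps_pos x ltac:(lia)) as [H1 H2].
  unfold s_par.
  assert (E : (1 - eps x) / (b - eps x) - 1/(2*b) = (b - 2 * b * eps x + eps x) * / (2*b*(b - eps x)))
    by (field; lra).
  assert (0 <= (b - 2 * b * eps x + eps x) * / (2*b*(b - eps x))).
  { apply Rmult_le_pos. nra. left; apply Rinv_0_lt_compat; nra. }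
  lra.
Qed.

Lemma s_pos : forall x, (2 <= x)%nat -> 0 < s_par b x.
Proof. intros. pose proof (s_lower x H). assert (0 < 1/(2*b)) by (unfold Rdiv; apply Rmult_lt_0_compat; [lra|apply Rinv_0_lt_compat; lra]). lra. Qed.
End S.

Section Chain.
Variables (theta b : R).
Hypothesis Ht : 0 < theta < 1.
Hypothesis Hb : 2 <= b.

Definition Ru := (1 - theta) / (2 * theta).
Definition Rd := 2 * theta / (1 - theta).

Lemma Ru_pos : 0 < Ru.
Proof. unfold Ru. apply Rmult_lt_0_compat; [lra | apply Rinv_0_lt_compat; lra]. Qed.
Lemma Rd_pos : 0 < Rd.
Proof. unfold Rd. apply Rmult_lt_0_compat; [lra | apply Rinv_0_lt_compat; lra]. Qed.

Lemma Rt_up : forall x, (1 <= x)%nat -> Rt theta x (S x) = Ru.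
Proof.
  intros x Hx. unfold Rt, pi_t, q_prop, Ru.
  destruct (Nat.leb_spec 1 (S x)); [|lia]. destruct (Nat.leb_spec 1 x); [|lia].
  destruct (Nat.eqb_spec x (S (S x))); [lia|]. rewrite !Nat.eqb_refl.
  assert ((1/2)^x <> 0) by (apply pow_nonzero; lra).
  simpl. field. lra.
Qed.

Lemma Rt_down : forall y, (1 <= y)%nat -> Rt theta (S y) y = Rd.
Proof.
  intros y Hy. unfold Rt, pi_t, q_prop, Rd.
  destruct (Nat.leb_spec 1 (S y)); [|lia]. destruct (Nat.leb_spec 1 y); [|lia].
  destruct (Nat.eqb_spec y (S (S y))); [lia|]. rewrite !Nat.eqb_refl.
  assert ((1/2)^y <> 0) by (apply pow_nonzero; lra).
  simpl. field. lra.
Qed.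

Lemma Rt_0 : Rt theta 1 0 = 0.
Proof. unfold Rt. unfold pi_t at 1. simpl. unfold Rdiv. ring. Qed.

Definition NA x y := noisy_acc theta b x y.
Definition Aa x := theta * NA x (S x).
Definition Dd x := (1 - theta) * NA x (pred x).

Lemma NA_range : forall x y, (1 <= x)%nat -> (1 <= y)%nat -> 0 <= Rt theta x y ->
  0 <= NA x y <= 1.
Proof.
  intros x y Hx Hy HR. unfold NA. rewrite NA_eq.
  pose proof (s_bounds b Hb x Hx). pose proof (s_bounds b Hb y Hy).
  pose proof (eps_pos x Hx). pose proof (eps_pos y Hy).
  assert (1/b <= 1) by (unfold Rdiv; rewrite Rmult_1_l; rewrite <- Rinv_1; apply Rinv_le_contravar; lra).
  apply NA4_bounds; try lra; apply Rmin1_bounds; apply Rmult_le_pos; auto;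
    unfold Rdiv; apply Rmult_le_pos; try lra; left; apply Rinv_0_lt_compat; lra.
Qed.

Lemma NA_0 : NA 1 0 = 0.
Proof. unfold NA. rewrite NA_eq. rewrite Rt_0. rewrite !Rmult_0_l.
  unfold Rmin. destruct (Rle_dec 1 0); [lra|]. unfold NA4. ring. Qed.

Lemma NA_up_range : forall x, (1 <= x)%nat -> 0 <= NA x (S x) <= 1.
Proof. intros. apply NA_range; auto. rewrite Rt_up; auto. left; apply Ru_pos. Qed.

Lemma NA_down_range : forall x, (1 <= x)%nat -> 0 <= NA x (pred x) <= 1.
Proof. intros x Hx. destruct x as [|[|y]]; [lia| |].
  - simpl. rewrite NA_0. lra.
  - apply NA_range; simpl; try lia. rewrite Rt_down; [|lia]. left; apply Rd_pos. Qed.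

Lemma AD_bounds : forall x, (1 <= x)%nat -> 0 <= Aa x /\ 0 <= Dd x /\ Aa x + Dd x <= 1.
Proof. intros x Hx. pose proof (NA_up_range x Hx). pose proof (NA_down_range x Hx).
  unfold Aa, Dd. nra. Qed.

Lemma Prow3 : forall x, (1 <= x)%nat -> forall z,
  Pnoisy theta b x z = pt (pred x) (Dd x) z + pt x (1 - Aa x - Dd x) z + pt (S x) (Aa x) z.
Proof.
  intros x Hx z. destruct x as [|x]; [lia|]. unfold Pnoisy, pt, Aa, Dd, NA. simpl pred.
  replace (Nat.eqb (S x) 0) with false by reflexivity.
  destruct (Nat.eqb_spec z (S (S x))); destruct (Nat.eqb_spec (S z) (S x));
  destruct (Nat.eqb_spec z (S x)); destruct (Nat.eqb_spec z x); subst; try lia; ring.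
Qed.

Lemma Prow_gen : forall x, exists y1 y2 y3 c1 c2 c3,
  (forall z, Pnoisy theta b x z = pt y1 c1 z + pt y2 c2 z + pt y3 c3 z) /\
  0 <= c1 /\ 0 <= c2 /\ 0 <= c3 /\ c1 + c2 + c3 = 1.
Proof.
  intros [|x].
  - exists 0%nat, 1%nat, 2%nat, 1, 0, 0. split; [|lra].
    intro z. unfold Pnoisy, pt. simpl.
    destruct (Nat.eqb_spec z 0); destruct (Nat.eqb_spec z 1); destruct (Nat.eqb_spec z 2); subst; try lia; ring.
  - exists (pred (S x)), (S x), (S (S x)), (Dd (S x)), (1 - Aa (S x) - Dd (S x)), (Aa (S x)).
    pose proof (AD_bounds (S x) ltac:(lia)). split; [apply Prow3; lia | lra].
Qed.

Lemma Aa_pos : forall x, (1 <= x)%nat -> 0 < Aa x.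
Proof.
  intros x Hx. unfold Aa, NA. apply Rmult_lt_0_compat; [lra|]. rewrite NA_eq.
  rewrite Rt_up; auto. pose proof Ru_pos.
  pose proof (s_bounds b Hb x Hx). pose proof (s_bounds b Hb (S x) ltac:(lia)).
  pose proof (s_pos b Hb (S x) ltac:(lia)).
  pose proof (eps_pos x Hx). pose proof (eps_pos (S x) ltac:(lia)).
  assert (1/b <= 1) by (unfold Rdiv; rewrite Rmult_1_l; rewrite <- Rinv_1; apply Rinv_le_contravar; lra).
  assert (Hpos : forall u v, 0 < u -> 0 < v -> 0 < Rmin 1 (Ru * (u / v))).
  { intros u v Hu Hv. apply Rmin_glb_lt; [lra|]. apply Rmult_lt_0_compat; auto.
    unfold Rdiv; apply Rmult_lt_0_compat; auto; apply Rinv_0_lt_compat; auto. }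
  eapply Rlt_le_trans; [| apply NA4_lower2]; try lra.
  - apply Rmult_lt_0_compat; auto. apply Rmin_glb_lt; apply Hpos; lra.
  - apply Rlt_le, Hpos; lra.
  - apply Rlt_le, Hpos; lra.
  - apply Rlt_le, Hpos; lra.
  - apply Rlt_le, Hpos; lra.
Qed.
End Chain.

Lemma frac_le : forall A B c, 0 < B -> 0 < c -> A * c <= B -> A * / B <= / c.
Proof. intros. assert (E : / c - A * / B = (B - A * c) * / (B * c)) by (field; lra).
  assert (0 <= (B - A * c) * / (B * c)).
  { apply Rmult_le_pos; [lra | left; apply Rinv_0_lt_compat; nra]. } lra. Qed.

Lemma frac_ge : forall A B C, 0 < B -> C * B <= A -> C <= A * / B.
Proof. intros. assert (E : A * / B - C = (A - C * B) * / B) by (field; lra).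
  assert (0 <= (A - C * B) * / B).
  { apply Rmult_le_pos; [lra | left; apply Rinv_0_lt_compat; nra]. } lra. Qed.

Lemma eps_le_inv : forall x, (1 <= x)%nat -> eps x <= / INR x.
Proof.
  intros x Hx. unfold eps.
  assert (1 <= INR x) by (apply (le_INR 1); auto).
  assert (INR x <= INR x ^ (3 - x mod 3)) by (m3 x; apply pow_ge_base; auto; lia).
  apply Rinv_le_contravar; lra.
Qed.

Section Quant.
Variables (theta b : R).
Hypothesis Ht : 0 < theta < 1.
Hypothesis Hb : 2 <= b.
Variable K : nat.
Hypothesis HK : 2 + 4 / Ru theta + 8 * Rd theta * b <= INR K.

Section X.
Variable x : nat.
Hypothesis Hx : (K <= x)%nat.
Let X := INR x.

Lemma X_facts : 2 <= X /\ 4 <= Ru theta * X /\ 8 * Rd theta * b <= X.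
Proof.
  pose proof (Ru_pos theta Ht). pose proof (Rd_pos theta Ht).
  assert (INR K <= X) by (apply le_INR; auto).
  assert (0 <= 4 / Ru theta) by (unfold Rdiv; apply Rmult_le_pos; [lra| left; apply Rinv_0_lt_compat; lra]).
  assert (0 <= 8 * Rd theta * b) by nra.
  split; [lra|]. split; [|lra].
  assert (4 / Ru theta <= X) by lra.
  assert (E : 4 = Ru theta * (4 / Ru theta)) by (field; lra). rewrite E.
  apply Rmult_le_compat_l; lra.
Qed.

Lemma x_ge2 : (2 <= x)%nat.
Proof. destruct X_facts as [H _]. apply INR_le. simpl. unfold X in H. lra. Qed.

Lemma m3_one : Rmin 1 (Ru theta * (b / eps x)) = 1.
Proof.
  pose proof x_ge2. destruct X_facts as [H1 [H2 H3]].
  pose proof (eps_le_inv x ltac:(lia)). pose proof (eps_pos x ltac:(lia)).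
  apply Rmin_left. pose proof (Ru_pos theta Ht).
  assert (X <= b / eps x).
  { unfold Rdiv. apply frac_ge; [lra|]. unfold X in *.
    assert (X * eps x <= 1).
    { unfold X. apply Rle_trans with (INR x * / INR x). apply Rmult_le_compat_l; lra.
      rewrite Rinv_r; lra. }
    unfold X in *; nra. }
  assert (Ru theta * X <= Ru theta * (b / eps x)) by (apply Rmult_le_compat_l; lra). lra.
Qed.

Lemma up_big : (x mod 3 = 0 \/ x mod 3 = 1)%nat -> theta / 2 <= Aa theta b x.
Proof.
  intros Hr. pose proof x_ge2. destruct X_facts as [H1 [H2 H3]].
  pose proof (Ru_pos theta Ht).
  unfold Aa, NA. rewrite NA_eq, Rt_up; try lia; auto. rewrite m3_one.
  assert (Hm4 : Rmin 1 (Ru theta * (eps (S x) / eps x)) = 1).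
  { apply Rmin_left.
    assert (X / 4 <= eps (S x) / eps x).
    { destruct Hr as [Hr|Hr].
      - rewrite (eps_r x 0 Hr), (eps_r (S x) 1) by (m3 x; m3 (S x); lia).
        rewrite S_INR. fold X. simpl (3-0)%nat. simpl (3-1)%nat.
        replace (/ (X + 1) ^ 2 / / X ^ 3) with (X^3 * / (X+1)^2) by (field; lra).
        apply frac_ge; [nra|]. nra.
      - rewrite (eps_r x 1 Hr), (eps_r (S x) 2) by (m3 x; m3 (S x); lia).
        rewrite S_INR. fold X. simpl (3-1)%nat. simpl (3-2)%nat.
        replace (/ (X + 1) ^ 1 / / X ^ 2) with (X^2 * / (X+1)) by (field; lra).
        apply frac_ge; [nra|]. nra. }
    assert (Ru theta * (X/4) <= Ru theta * (eps (S x) / eps x)) by (apply Rmult_le_compat_l; lra).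
    lra. }
  rewrite Hm4.
  pose proof (s_bounds b Hb x ltac:(lia)). pose proof (s_bounds b Hb (S x) ltac:(lia)).
  pose proof (eps_pos x ltac:(lia)). pose proof (eps_pos (S x) ltac:(lia)).
  assert (1/b <= 1/2) by (unfold Rdiv; rewrite !Rmult_1_l; apply Rinv_le_contravar; lra).
  assert (Hl : (1 - s_par b x) * (s_par b (S x) * 1 + (1 - s_par b (S x)) * 1) <=
    NA4 (s_par b x) (s_par b (S x)) (Rmin 1 (Ru theta * (b / b)))
      (Rmin 1 (Ru theta * (eps (S x) / b))) 1 1).
  { apply NA4_lower; try lra; apply Rmin1_bounds; apply Rmult_le_pos; try lra;
      unfold Rdiv; apply Rmult_le_pos; try lra; left; apply Rinv_0_lt_compat; lra. }
  nra.
Qed.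

Lemma up_small : (x mod 3 = 2)%nat -> theta / (4 * b) <= Aa theta b x.
Proof.
  intros Hr. pose proof x_ge2. destruct X_facts as [H1 [H2 H3]].
  pose proof (Ru_pos theta Ht).
  unfold Aa, NA. rewrite NA_eq, Rt_up; try lia; auto. rewrite m3_one.
  pose proof (s_bounds b Hb x ltac:(lia)). pose proof (s_bounds b Hb (S x) ltac:(lia)).
  pose proof (s_lower b Hb (S x) ltac:(lia)).
  pose proof (eps_pos x ltac:(lia)). pose proof (eps_pos (S x) ltac:(lia)).
  assert (1/b <= 1/2) by (unfold Rdiv; rewrite !Rmult_1_l; apply Rinv_le_contravar; lra).
  assert (Hm : 0 <= Rmin 1 (Ru theta * (eps (S x) / eps x))).
  { apply Rmin1_bounds; apply Rmult_le_pos; try lra;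
      unfold Rdiv; apply Rmult_le_pos; try lra; left; apply Rinv_0_lt_compat; lra. }
  set (m4 := Rmin 1 (Ru theta * (eps (S x) / eps x))) in *.
  assert (Hl : (1 - s_par b x) * (s_par b (S x) * 1 + (1 - s_par b (S x)) * m4) <=
    NA4 (s_par b x) (s_par b (S x)) (Rmin 1 (Ru theta * (b / b)))
      (Rmin 1 (Ru theta * (eps (S x) / b))) 1 m4).
  { apply NA4_lower; try lra; apply Rmin1_bounds; apply Rmult_le_pos; try lra;
      unfold Rdiv; apply Rmult_le_pos; try lra; left; apply Rinv_0_lt_compat; lra. }
  assert (E : theta / (4 * b) = theta * ((1/2) * (1 / (2 * b)))) by (field; lra).
  rewrite E. apply Rmult_le_compat_l; [lra|].
  assert (0 <= (1 - s_par b (S x)) * m4) by (apply Rmult_le_pos; lra).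
  assert (0 <= 1 / (2*b)) by (unfold Rdiv; apply Rmult_le_pos; [lra| left; apply Rinv_0_lt_compat; lra]).
  assert (1/2 * (1 / (2*b)) <= (1 - s_par b x) * s_par b (S x)) by (apply Rmult_le_compat; lra).
  nra.
Qed.

Lemma down_small : (x mod 3 = 1 \/ x mod 3 = 2)%nat -> Dd theta b x <= (1 - theta) * (3 / b).
Proof.
  intros Hr. pose proof x_ge2. destruct X_facts as [H1 [H2 H3]].
  pose proof (Rd_pos theta Ht).
  destruct x as [|y]; [lia|]. simpl pred.
  assert (HY : INR (S y) = INR y + 1) by apply S_INR.
  set (Y := INR y) in *. unfold X in *. rewrite HY in *.
  unfold Dd, NA. simpl pred. rewrite NA_eq, Rt_down; try lia; auto.
  apply Rmult_le_compat_l; [lra|].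
  pose proof (s_bounds b Hb (S y) ltac:(lia)). pose proof (s_bounds b Hb y ltac:(lia)).
  pose proof (eps_pos (S y) ltac:(lia)). pose proof (eps_pos y ltac:(lia)).
  assert (Hratio : Rd theta * (eps y / eps (S y)) <= 1 / b).
  { destruct Hr as [Hr|Hr].
    - rewrite (eps_r (S y) 1 Hr), (eps_r y 0) by (m3 y; m3 (S y); lia).
      fold Y. rewrite HY. simpl (3-1)%nat. simpl (3-0)%nat.
      replace (Rd theta * (/ Y ^ 3 / / (Y + 1) ^ 2)) with ((Rd theta * (Y+1)^2) * / Y^3) by (field; lra).
      unfold Rdiv; rewrite Rmult_1_l. apply frac_le; [nra|lra|].
      assert (Y >= (Y+1)/2) by lra.
      assert (Y^3 >= ((Y+1)/2)^3).
      { simpl. rewrite !Rmult_1_r. assert (0 <= (Y+1)/2) by lra.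
        apply Rle_ge. apply Rmult_le_compat; try lra; [nra|]. apply Rmult_le_compat; lra. }
      assert ((Y+1)^2 * (8 * Rd theta * b) <= (Y+1)^2 * (Y+1)) by (apply Rmult_le_compat_l; nra).
      assert (((Y+1)/2)^3 = (Y+1)^2 * (Y+1) / 8) by (field).
      nra.
    - rewrite (eps_r (S y) 2 Hr), (eps_r y 1) by (m3 y; m3 (S y); lia).
      fold Y. rewrite HY. simpl (3-1)%nat. simpl (3-2)%nat.
      replace (Rd theta * (/ Y ^ 2 / / (Y + 1) ^ 1)) with ((Rd theta * (Y+1)) * / Y^2) by (field; lra).
      unfold Rdiv; rewrite Rmult_1_l. apply frac_le; [nra|lra|].
      assert (Y^2 >= ((Y+1)/2)^2) by (simpl; nra).
      assert ((Y+1) * (8 * Rd theta * b) <= (Y+1) * (Y+1)) by (apply Rmult_le_compat_l; nra).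
      assert (((Y+1)/2)^2 = (Y+1) * (Y+1) / 4) by (field).
      nra. }
  assert (1/b <= 1/2) by (unfold Rdiv; rewrite !Rmult_1_l; apply Rinv_le_contravar; lra).
  eapply Rle_trans; [apply NA4_upper|]; try lra.
  all: try (apply Rmin1_bounds; apply Rmult_le_pos; try lra;
      unfold Rdiv; apply Rmult_le_pos; try lra; left; apply Rinv_0_lt_compat; lra).
  pose proof (Rmin_r 1 (Rd theta * (eps y / eps (S y)))). lra.
Qed.

End X.
End Quant.

Section Fin.
Variables (theta b : R) (K : nat).
Hypothesis Ht : 0 < theta < 1.
Let lam := (1 - theta) / theta.
Hypothesis Hb : b = 3 + 144 * lam ^ 3.
Hypothesis HK : 2 + 4 / Ru theta + 8 * Rd theta * b <= INR K.

Lemma lam_pos : 0 < lam.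
Proof. unfold lam. apply Rmult_lt_0_compat; [lra | apply Rinv_0_lt_compat; lra]. Qed.
Lemma Hb2 : 2 <= b.
Proof. pose proof lam_pos. rewrite Hb. assert (0 < lam^3) by (apply pow_lt; auto). lra. Qed.

Definition gp (r : nat) : R :=
  if Nat.eqb r 0 then 2 * lam else if Nat.eqb r 1 then 6 * lam / b else 12 * lam.
Definition g (k : nat) : R :=
  if Nat.ltb k K then (Dd theta b k + 1) / Aa theta b k else gp (k mod 3).
Fixpoint rho (n : nat) : R := match n with O => 1 | S k => g (S k) * rho k end.
Definition GG := gp 0 * gp 1 * gp 2.
Definition cp (r : nat) : R :=
  (1 + gp ((r+1) mod 3) + gp ((r+1) mod 3) * gp ((r+2) mod 3)) / (1 - GG).
Fixpoint tl (n x : nat) : R :=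
  match n with O => rho x * cp (x mod 3) | S n' => rho x + tl n' (S x) end.
Definition f (x : nat) : R := tl (K - x) x.

Lemma gp_pos : forall r, 0 < gp r.
Proof. pose proof lam_pos. pose proof Hb2. intro r; unfold gp.
  destruct (Nat.eqb r 0); [lra|]. destruct (Nat.eqb r 1); [|lra].
  unfold Rdiv. apply Rmult_lt_0_compat; [lra| apply Rinv_0_lt_compat; lra]. Qed.

Lemma GG_lt1 : GG < 1.
Proof. pose proof lam_pos. pose proof Hb2. unfold GG, gp. simpl.
  replace (2 * lam * (6 * lam / b) * (12 * lam)) with (144 * lam^3 * / b) by (field; lra).
  rewrite <- (Rinv_r b) by lra. apply Rmult_lt_compat_r; [apply Rinv_0_lt_compat; lra|].
  rewrite Hb; lra. Qed.

Lemma g_pos : forall k, (1 <= k)%nat -> 0 < g k.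
Proof.
  intros k Hk. unfold g. destruct (Nat.ltb k K); [|apply gp_pos].
  pose proof (Aa_pos theta b Ht Hb2 k Hk). destruct (AD_bounds theta b Ht Hb2 k Hk) as [_ [HD _]].
  unfold Rdiv. apply Rmult_lt_0_compat; [lra | apply Rinv_0_lt_compat; lra].
Qed.

Lemma rho_pos : forall n, 0 < rho n.
Proof. induction n; simpl; [lra|]. apply Rmult_lt_0_compat; auto. apply g_pos; lia. Qed.

Lemma cp_pos : forall r, 0 <= cp r.
Proof. intro r. unfold cp. pose proof GG_lt1. pose proof (gp_pos ((r+1) mod 3)).
  pose proof (gp_pos ((r+2) mod 3)).
  unfold Rdiv. apply Rmult_le_pos; [nra | left; apply Rinv_0_lt_compat; lra]. Qed.

Lemma tl_pos : forall n x, 0 <= tl n x.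
Proof. induction n; intro x; simpl.
  - apply Rmult_le_pos; [left; apply rho_pos | apply cp_pos].
  - pose proof (rho_pos x). pose proof (IHn (S x)). lra. Qed.

Lemma f_pos : forall x, 0 <= f x.
Proof. intro; apply tl_pos. Qed.

Lemma cp_step : forall r, (r < 3)%nat -> cp r = 1 + gp ((r+1) mod 3) * cp ((r+1) mod 3).
Proof.
  intros r Hr. pose proof GG_lt1. unfold cp, GG.
  destruct r as [|[|[|r]]]; try lia; simpl; field; unfold GG in *; simpl in *; lra.
Qed.

Lemma f_step : forall x, f x = rho x + f (S x).
Proof.
  intro x. unfold f. destruct (Nat.ltb_spec x K).
  - replace (K - x)%nat with (S (K - S x)) by lia. reflexivity.
  - replace (K - x)%nat with 0%nat by lia. replace (K - S x)%nat with 0%nat by lia.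
    cbn [tl rho]. unfold g. destruct (Nat.ltb_spec (S x) K); [lia|].
    replace (S x mod 3)%nat with ((x mod 3 + 1) mod 3)%nat.
    2:{ m3 x; m3 (S x); m3 (x mod 3 + 1)%nat. lia. }
    rewrite (cp_step (x mod 3)) by (apply Nat.mod_upper_bound; lia). ring.
Qed.

Lemma key_D : forall x, (2 <= x)%nat -> Dd theta b x <= Aa theta b x * g x.
Proof.
  intros x Hx. pose proof Hb2. pose proof lam_pos.
  pose proof (Aa_pos theta b Ht Hb2 x ltac:(lia)).
  destruct (AD_bounds theta b Ht Hb2 x ltac:(lia)) as [HA [HD HAD]].
  unfold g. destruct (Nat.ltb_spec x K) as [HxK|HxK].
  - replace (Aa theta b x * ((Dd theta b x + 1) / Aa theta b x)) with (Dd theta b x + 1)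
      by (field; lra). lra.
  - pose proof (Nat.mod_upper_bound x 3 ltac:(lia)).
    assert (Elam : lam * theta = 1 - theta) by (unfold lam; field; lra).
    destruct (x mod 3) as [|[|[|r]]] eqn:Er; try lia; unfold gp; simpl.
    + pose proof (up_big theta b Ht Hb2 K HK x HxK (or_introl Er)).
      assert (Dd theta b x <= 1 - theta).
      { unfold Dd. pose proof (NA_down_range theta b Ht Hb2 x ltac:(lia)). nra. }
      assert (theta / 2 * (2 * lam) <= Aa theta b x * (2 * lam)) by (apply Rmult_le_compat_r; lra).
      replace (theta / 2 * (2 * lam)) with (lam * theta) in * by field. lra.
    + pose proof (up_big theta b Ht Hb2 K HK x HxK (or_intror Er)).
      pose proof (down_small theta b Ht Hb2 K HK x HxK (or_introl Er)).
      assert (0 <= 6 * lam / b) by (unfold Rdiv; apply Rmult_le_pos; [lra|left; apply Rinv_0_lt_compat; lra]).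
      assert (theta / 2 * (6 * lam / b) <= Aa theta b x * (6 * lam / b)) by (apply Rmult_le_compat_r; lra).
      replace (theta / 2 * (6 * lam / b)) with ((lam * theta) * (3 / b)) in * by (field; lra).
      rewrite Elam in *. lra.
    + pose proof (up_small theta b Ht Hb2 K HK x HxK Er).
      pose proof (down_small theta b Ht Hb2 K HK x HxK (or_intror Er)).
      assert (theta / (4 * b) * (12 * lam) <= Aa theta b x * (12 * lam)) by (apply Rmult_le_compat_r; lra).
      replace (theta / (4 * b) * (12 * lam)) with ((lam * theta) * (3 / b)) in * by (field; lra).
      rewrite Elam in *. lra.
Qed.

Lemma trans_all : forall m, (1 <= m)%nat -> transient_state (Pnoisy theta b) m.
Proof.
  intros m Hm. pose proof Hb2.
  apply (transient_m (Pnoisy theta b) (Prow_gen theta b Ht Hb2) (Aa theta b) (Dd theta b) m f Hm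
           (Prow3 theta b)).
  - intros x Hx. apply (AD_bounds theta b Ht Hb2 x); lia.
  - intros x Hx. apply (AD_bounds theta b Ht Hb2 x); lia.
  - intros x Hx. apply (AD_bounds theta b Ht Hb2 x); lia.
  - apply f_pos.
  - rewrite f_step. pose proof (rho_pos m). pose proof (f_pos (S m)). lra.
  - intros x Hx. destruct x as [|y]; [lia|]. simpl pred.
    pose proof (f_step y) as E1. pose proof (f_step (S y)) as E2.
    assert (E3 : rho (S y) = g (S y) * rho y) by reflexivity.
    pose proof (key_D (S y) ltac:(lia)). pose proof (rho_pos y).
    assert (Dd theta b (S y) * rho y <= Aa theta b (S y) * g (S y) * rho y)
      by (apply Rmult_le_compat_r; lra).
    rewrite E1, E2, E3. rewrite E3 in E2. nra.
  - apply Aa_pos; auto.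
  - rewrite (f_step m). pose proof (rho_pos m). lra.
Qed.
End Fin.

Theorem proposition2p3_aux :
  forall theta : R, 0 < theta < 1 ->
  exists b : R, 1 < b /\ transient_chain (Pnoisy theta b).
Proof.
  intros theta Ht.
  set (lam := (1 - theta) / theta).
  set (b := 3 + 144 * lam ^ 3).
  destruct (INR_archimed 1 (2 + 4 / Ru theta + 8 * Rd theta * b) ltac:(lra)) as [K HK].
  exists b. split.
  - pose proof (lam_pos theta Ht). assert (0 < lam^3) by (apply pow_lt; auto). unfold b; lra.
  - intros m Hm. apply (trans_all theta b K Ht eq_refl); [lra | auto].
Qed.

Theorem proposition2p3 :
  forall theta : R, 0 < theta < 1 ->
  exists b : R, 1 < b /\ transient_chain (Pnoisy theta b).
Proof. exact proposition2p3_aux. Qed.
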